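(* Let $U$ be a Hilbert space, $T: U\rightrightarrows U$, $(\hat u,\hat w)\in\operatorname{graph}T$, and $P,N,M\in\mathcal{L}(U;U)$ with $M\ge0$ and $M\ge P$. Let $\alpha>0$, and if $\alpha\in(0,1)$ suppose $(M,M-P)\in\mathcal{P}(T^{-1}(\hat w),\hat u)$. Then $T$ is $(P,N,M)$-partially subregular at $(\hat u,\hat w)$ if it is $(\alpha P,\alpha N,M)$-partially subregular there. Conversely, if $(M,M-\alpha P)\in\mathcal{P}(T^{-1}(\hat w),\hat u)$ in case $\alpha>1$, then $T$ is $(\alpha P,\alpha N,M)$-partially subregular at $(\hat u,\hat w)$ if it is $(P,N,M)$-partially subregular there. In particular, if $(M,M-\max\{\alpha,1\}P)\in\mathcal{P}(T^{-1}(\hat w),\hat u)$, the two properties are equivalent.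
   Context: For $T\in\mathcal{L}(U;U)$ (not necessarily positive): $\|x\|^2_T:=\langle Tx,x\rangle$, $\operatorname{dist}^2_T(z,A):=\inf_{u\in A}\|z-u\|^2_T$ ($\inf\emptyset=+\infty$); $T\ge S$ means $T-S$ positive semidefinite. For $M,P,N\in\mathcal{L}(U;U)$ with $N\ge0$, $M\ge0$, $M\ge P$, $T$ is $(P,N,M)$-partially subregular at $(\hat u,\hat w)$ if there is a neighbourhood $\mathcal{U}\ni\hat u$ with $\operatorname{dist}^2_N(\hat w,T(u)) + \operatorname{dist}^2_{M-P}(u,T^{-1}(\hat w))\ge\operatorname{dist}^2_M(u,T^{-1}(\hat w))$ for all $u\in\mathcal{U}$. For $M,M'\in\mathcal{L}(U;U)$, $A\subset U$, $\hat u\in A$: $(M,M')\in\mathcal{P}(A,\hat u)$ means there is a neighbourhood $\mathcal{U}'\ni\hat u$ such that each $u\in\mathcal{U}'$ has a common projection onto $A$ with respect to $\|\cdot\|_M$ and $\|\cdot\|_{M'}$ (a point of $A$ minimising both $\|u-\cdot\|_M$ and $\|u-\cdot\|_{M'}$ over $A$). *)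

(* Defs.v *)
From mathcomp Require Import all_boot all_order all_algebra.
From mathcomp Require Import all_classical all_reals all_analysis.
Set Implicit Arguments. Unset Strict Implicit. Unset Printing Implicit Defensive.
Import Order.TTheory GRing.Theory Num.Theory.
Import numFieldNormedType.Exports.
Local Open Scope classical_set_scope.
Local Open Scope ring_scope.

Section Defs.
Context {R : realType} {U : normedModType R}.

(* ip is a (real) inner product inducing the norm of U; together with
   completeness of U this makes U a real Hilbert space. *)
Definition is_inner_product (ip : U -> U -> R) : Prop :=
  [/\ (forall x y, ip x y = ip y x),
      (forall (a : R) x y z, ip (a *: x + y) z = a * ip x z + ip y z) &
      (forall x, ip x x = `|x| ^+ 2)].

Definition bounded_linear (T : U -> U) : Prop := linear T /\ continuous T.

Definition qform (ip : U -> U -> R) (T : U -> U) (x : U) : R := ip (T x) x.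

(* dist_T^2(z, A) := inf_{u in A} ||z - u||_T^2, with inf of the empty set = +oo *)
Definition dist2 (ip : U -> U -> R) (T : U -> U) (z : U) (A : set U) : \bar R :=
  ereal_inf [set (qform ip T (z - u))%:E | u in A].

Definition psd (ip : U -> U -> R) (T : U -> U) : Prop := forall x, 0 <= qform ip T x.

Definition op_ge (ip : U -> U -> R) (T S : U -> U) : Prop := psd ip (fun x => T x - S x).

Definition op_sub (T S : U -> U) : U -> U := fun x => T x - S x.
Definition op_scale (a : R) (T : U -> U) : U -> U := fun x => a *: T x.

Definition inv_img (T : U -> set U) (w : U) : set U := [set u | T u w].

Definition partially_subregular (ip : U -> U -> R) (T : U -> set U)
    (P N M : U -> U) (uh wh : U) : Prop :=
  exists2 V : set U, nbhs uh V & forall u, V u ->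
    (dist2 ip N wh (T u) + dist2 ip (op_sub M P) u (inv_img T wh)
       >= dist2 ip M u (inv_img T wh))%E.

Definition common_proj (ip : U -> U -> R) (M M' : U -> U) (A : set U) (uh : U) : Prop :=
  exists2 V : set U, nbhs uh V & forall u, V u ->
    exists2 a, A a & forall a', A a' ->
      qform ip M (u - a) <= qform ip M (u - a') /\
      qform ip M' (u - a) <= qform ip M' (u - a').

End Defs.

(* Main.v *)
Require Import Defs.
From mathcomp Require Import all_boot all_order all_algebra.
From mathcomp Require Import all_classical all_reals all_analysis.
From mathcomp Require Import lra.
Import Order.TTheory GRing.Theory Num.Theory.
Import numFieldNormedType.Exports.
Local Open Scope classical_set_scope.
Local Open Scope ring_scope.

Set Implicit Arguments. Unset Strict Implicit. Unset Printing Implicit Defensive.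
Section Abs.
Context {R : realType} {X : Type} (S : set X).
Local Notation inf f := (ereal_inf [set ((f s)%:E : \bar R) | s in S]).

Lemma inf_ge (f : X -> R) (z : R) : (forall s, S s -> z <= f s) -> (z%:E <= inf f)%E.
Proof. by move=> H; apply: le_ereal_inf_tmp => _ [s Ss <-]; rewrite lee_fin; apply: H. Qed.

Lemma inf_le (f : X -> R) s : S s -> (inf f <= (f s)%:E)%E.
Proof. by move=> Ss; apply: ereal_inf_lbound; exists s. Qed.

Lemma nNy (z : R) (x : \bar R) : (z%:E <= x)%E -> x != -oo%E.
Proof. by case: x. Qed.

Lemma inf_fin (m : X -> R) s0 : S s0 -> (forall s, S s -> 0 <= m s) ->
  exists cr, inf m = cr%:E /\ forall s, S s -> cr <= m s.
Proof.
move=> S0 m0; have h0 := inf_ge m0; have h1 := inf_le m S0.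
have hl : forall s, S s -> (inf m <= (m s)%:E)%E by move=> s Ss; apply: inf_le.
move: (inf m) h0 h1 hl => [cr| |] //= h0 h1 hl.
by exists cr; split=> // s Ss; rewrite -lee_fin; apply: hl.
Qed.

Lemma goal_fin (cr r : R) (d : \bar R) : ((cr - r)%:E <= d)%E -> (cr%:E <= r%:E + d)%E.
Proof. by move=> H; rewrite -leeBlDl // -EFinB. Qed.

Variables (m p : X -> R) (a : \bar R) (al : R) (s0 : X).
Hypotheses (S0 : S s0) (m0 : forall s, S s -> 0 <= m s)
  (mp0 : forall s, S s -> 0 <= m s - p s) (a0 : (0%:E <= a)%E) (al0 : 0 < al).

Lemma L1 : 1 <= al ->
  (inf m <= al%:E * a + inf (fun s => m s - al * p s))%E ->
  (inf m <= a + inf (fun s => m s - p s))%E.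
Proof.
move=> al1; have [cr [-> cle]] := inf_fin S0 m0.
move: a a0 => [r| |] //= _ H.
  apply: goal_fin; apply: inf_ge => s Ss.
  have := le_trans H (leeD2l _ (inf_le _ Ss)); rewrite -EFinM -EFinD lee_fin => h.
  have := cle s Ss; nra.
by rewrite addye ?leey // (nNy (inf_ge mp0)).
Qed.

Lemma L2 : (forall s, S s -> m s0 <= m s /\ m s0 - p s0 <= m s - p s) ->
  (inf m <= al%:E * a + inf (fun s => m s - al * p s))%E ->
  (inf m <= a + inf (fun s => m s - p s))%E.
Proof.
move=> mn; have [cr [Ec cle]] := inf_fin S0 m0.
have ecr : cr = m s0.
  apply/eqP; rewrite eq_le cle //= -lee_fin -Ec; apply: inf_ge => s Ss.
  by case: (mn s Ss).
rewrite Ec; move: a a0 => [r| |] //= _ H.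
  apply: goal_fin; apply: inf_ge => s Ss.
  have := le_trans H (leeD2l _ (inf_le _ S0)); rewrite -EFinM -EFinD lee_fin => h.
  have [_ h2] := mn s Ss.
  have hp : p s0 <= r by rewrite -(ler_pM2l al0); lra.
  lra.
by rewrite addye ?leey // (nNy (inf_ge mp0)).
Qed.

Lemma L3 : al <= 1 ->
  (inf m <= a + inf (fun s => m s - p s))%E ->
  (inf m <= al%:E * a + inf (fun s => m s - al * p s))%E.
Proof.
move=> al1; have [cr [-> cle]] := inf_fin S0 m0.
move: a a0 => [r| |] //= _ H.
  rewrite -EFinM; apply: goal_fin; apply: inf_ge => s Ss.
  have := le_trans H (leeD2l _ (inf_le _ Ss)); rewrite -EFinD lee_fin => h.
  have c1 := cle s Ss.
  have e1 : al * cr <= al * (r + (m s - p s)) by rewrite ler_pM2l.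
  have e2 : (1 - al) * cr <= (1 - al) * m s by apply: ler_wpM2l; lra.
  lra.
rewrite gt0_muley ?lte_fin // addye ?leey //.
apply: (nNy (z:=0)); apply: inf_ge => s Ss.
have c1 := m0 Ss; have c2 := mp0 Ss.
have e1 : 0 <= al * (m s - p s) by apply: mulr_ge0; [exact: ltW | lra].
have e2 : 0 <= (1 - al) * m s by apply: mulr_ge0; [lra | exact: c1].
lra.
Qed.

Lemma L4 : (forall s, S s -> m s0 <= m s /\ m s0 - al * p s0 <= m s - al * p s) ->
  (inf m <= a + inf (fun s => m s - p s))%E ->
  (inf m <= al%:E * a + inf (fun s => m s - al * p s))%E.
Proof.
move=> mn; have [cr [Ec cle]] := inf_fin S0 m0.
have ecr : cr = m s0.
  apply/eqP; rewrite eq_le cle //= -lee_fin -Ec; apply: inf_ge => s Ss.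
  by case: (mn s Ss).
rewrite Ec; move: a a0 => [r| |] //= _ H.
  rewrite -EFinM; apply: goal_fin; apply: inf_ge => s Ss.
  have := le_trans H (leeD2l _ (inf_le _ S0)); rewrite -EFinD lee_fin => h.
  have [_ h2] := mn s Ss.
  have hp : p s0 <= r by lra.
  have : al * p s0 <= al * r by rewrite ler_pM2l.
  lra.
rewrite gt0_muley ?lte_fin // addye ?leey //.
apply: (nNy (z:=m s0 - al * p s0)); apply: inf_ge => s Ss.
by case: (mn s Ss).
Qed.

End Abs.

Section Conn.
Context {R : realType} {U : normedModType R} (ip : U -> U -> R).
Hypothesis hip : is_inner_product ip.

Lemma ip0 z : ip 0 z = 0.
Proof.
case: hip => _ hl _; have := hl 1 0 0 z.
rewrite scaler0 addr0 mul1r => h; lra.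
Qed.

Lemma qform_scale a (Q : U -> U) x : qform ip (op_scale a Q) x = a * qform ip Q x.
Proof.
case: hip => _ hl _; rewrite /qform /op_scale.
by rewrite -[a *: Q x]addr0 hl ip0 addr0.
Qed.

Lemma qform_sub (M Q : U -> U) x : qform ip (op_sub M Q) x = qform ip M x - qform ip Q x.
Proof.
case: hip => _ hl _; rewrite /qform /op_sub.
by rewrite addrC -scaleN1r hl mulN1r addrC.
Qed.

Lemma dist2_sub (M Q : U -> U) z (A : set U) :
  dist2 ip (op_sub M Q) z A =
  ereal_inf [set ((fun s => qform ip M (z - s) - qform ip Q (z - s)) s)%:E | s in A].
Proof. by rewrite /dist2; congr ereal_inf; apply: eq_imagel => s _; rewrite qform_sub. Qed.

Lemma dist2_subZ (M Q : U -> U) a z (A : set U) :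
  dist2 ip (op_sub M (op_scale a Q)) z A =
  ereal_inf [set ((fun s => qform ip M (z - s) - a * qform ip Q (z - s)) s)%:E | s in A].
Proof. by rewrite /dist2; congr ereal_inf; apply: eq_imagel => s _; rewrite qform_sub qform_scale. Qed.

Lemma dist2_scale a (Q : U -> U) z (A : set U) : 0 < a ->
  dist2 ip (op_scale a Q) z A = (a%:E * dist2 ip Q z A)%E.
Proof.
move=> a0; rewrite /dist2 -ereal_inf_pZl // image_comp; congr ereal_inf.
by apply: eq_imagel => s _ /=; rewrite qform_scale EFinM.
Qed.

End Conn.

Theorem lemma4p7 (R : realType) (U : completeNormedModType R)
  (ip : U -> U -> R) (T : U -> set U) (uh wh : U) (P N M : U -> U) (alpha : R) :
  is_inner_product ip ->
  T uh wh ->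
  bounded_linear P -> bounded_linear N -> bounded_linear M ->
  psd ip N -> psd ip M -> op_ge ip M P ->
  0 < alpha ->
  [/\ ((alpha < 1 -> common_proj ip M (op_sub M P) (inv_img T wh) uh) ->
        partially_subregular ip T (op_scale alpha P) (op_scale alpha N) M uh wh ->
        partially_subregular ip T P N M uh wh),
      ((1 < alpha -> common_proj ip M (op_sub M (op_scale alpha P)) (inv_img T wh) uh) ->
        partially_subregular ip T P N M uh wh ->
        partially_subregular ip T (op_scale alpha P) (op_scale alpha N) M uh wh) &
      (common_proj ip M (op_sub M (op_scale (Num.max alpha 1) P)) (inv_img T wh) uh ->
        (partially_subregular ip T P N M uh wh <->
         partially_subregular ip T (op_scale alpha P) (op_scale alpha N) M uh wh))].
Proof.
move=> hip Tuh _ _ _ psdN psdM geMP al0.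
set S := inv_img T wh.
have S0 : S uh by [].
have m0 : forall u s, S s -> 0 <= qform ip M (u - s) by move=> u s _; apply: psdM.
have mp0 : forall u s, S s -> 0 <= qform ip M (u - s) - qform ip P (u - s).
  by move=> u s _; rewrite -(qform_sub hip); apply: geMP.
have a0 : forall u, (0%:E <= dist2 ip N wh (T u))%E.
  by move=> u; apply: inf_ge => s _; apply: psdN.
pose CP (b : R) := exists2 V : set U, nbhs uh V & forall u, V u ->
  exists2 s0, S s0 & forall s, S s ->
    qform ip M (u - s0) <= qform ip M (u - s) /\
    qform ip M (u - s0) - b * qform ip P (u - s0) <= qform ip M (u - s) - b * qform ip P (u - s).
have cpE : forall b, common_proj ip M (op_sub M (op_scale b P)) S uh -> CP b.
  move=> b [V hV cV]; exists V => // u /cV [s0 Ss0 h]; exists s0 => // s Ss.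
  by have := h s Ss; rewrite !(qform_sub hip) !(qform_scale hip).
have cpE1 : common_proj ip M (op_sub M P) S uh -> CP 1.
  move=> [V hV cV]; exists V => // u /cV [s0 Ss0 h]; exists s0 => // s Ss.
  by have := h s Ss; rewrite !(qform_sub hip) !mul1r.
have D1 : (1 <= alpha \/ CP 1) ->
    partially_subregular ip T (op_scale alpha P) (op_scale alpha N) M uh wh ->
    partially_subregular ip T P N M uh wh.
  move=> hc [V hV H].
  have [V' hV' H'] : exists2 V' : set U, nbhs uh V' & forall u, V' u -> (1 <= alpha \/
      exists2 s0, S s0 & forall s, S s ->
    qform ip M (u - s0) <= qform ip M (u - s) /\
    qform ip M (u - s0) - 1 * qform ip P (u - s0) <= qform ip M (u - s) - 1 * qform ip P (u - s)).
    case: hc => [h|[V' hV' H']]; first by exists setT => //; [exact: filterT | left].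
    by exists V' => // u /H' ?; right.
  exists (V `&` V'); first exact: filterI.
  move=> u [Vu V'u]; have := H u Vu.
  rewrite (dist2_scale hip) // (dist2_subZ hip) (dist2_sub hip) => h.
  case: (H' u V'u) => [al1|[s0 Ss0 hs0]].
    apply: (L1 (p := fun s => qform ip P (u - s)) S0 (m0 u) _ (a0 u) al1); last exact: h.
    by move=> s Ss; apply: mp0.
  apply: (L2 (p := fun s => qform ip P (u - s)) Ss0 (m0 u) _ (a0 u) al0); last exact: h.
    by move=> s Ss; apply: mp0.
  by move=> s Ss; have := hs0 s Ss; rewrite !mul1r.
have D2 : (alpha <= 1 \/ CP alpha) ->
    partially_subregular ip T P N M uh wh ->
    partially_subregular ip T (op_scale alpha P) (op_scale alpha N) M uh wh.
  move=> hc [V hV H].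
  have [V' hV' H'] : exists2 V' : set U, nbhs uh V' & forall u, V' u -> (alpha <= 1 \/
      exists2 s0, S s0 & forall s, S s ->
    qform ip M (u - s0) <= qform ip M (u - s) /\
    qform ip M (u - s0) - alpha * qform ip P (u - s0) <= qform ip M (u - s) - alpha * qform ip P (u - s)).
    case: hc => [h|[V' hV' H']]; first by exists setT => //; [exact: filterT | left].
    by exists V' => // u /H' ?; right.
  exists (V `&` V'); first exact: filterI.
  move=> u [Vu V'u]; have := H u Vu.
  rewrite (dist2_scale hip) // (dist2_subZ hip) (dist2_sub hip) => h.
  case: (H' u V'u) => [al1|[s0 Ss0 hs0]].
    apply: (L3 (p := fun s => qform ip P (u - s)) S0 (m0 u) _ (a0 u) al0 al1).
      by move=> s Ss; apply: mp0.
    exact: h.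
  exact: (L4 (m := fun s => qform ip M (u - s)) (p := fun s => qform ip P (u - s)) Ss0 (m0 u) (a0 u) al0 hs0 h).
split.
- move=> hc; apply: D1; have [al1|al1] := ltP alpha 1; last by left.
  by right; apply: cpE1; apply: hc.
- move=> hc; apply: D2; have [al1|al1] := leP alpha 1; first by left.
  by right; apply: cpE; apply: hc.
- move=> hc; split.
    apply: D2; have [al1|al1] := leP alpha 1; first by left.
    by right; move: hc; rewrite max_l ?(ltW al1) //; apply: cpE.
  apply: D1; have [al1|al1] := leP 1 alpha; first by left.
  right; move: hc; rewrite max_r ?(ltW al1) //; move=> /cpE [V hV H].
  by exists V.
Qed.
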